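(* Let $U\in\mathcal{U}_c$ and suppose that $\eta_U$ is differentiable with $\eta_U'(x)/\eta_U(x)=o(1/x)$ as $x\to\infty$. Then \[ \frac{\omega_U'(x)}{\omega_U(x)}\le o(1/x)\quad\text{as } x\to\infty. \]
   Context: The class $\mathcal{U}$: $U(t)=u(e^{it})$ with $u$ real-valued continuous on $\mathbb{T}$, $u(z)=u(\bar z)$, smooth except possibly at $1$, $U$ even, increasing on $[0,\pi]$, $U(0)=0$, and $h_U(t):=\int_t^\pi U(x)x^{-2}dx\to\infty$ as $t\to0^+$. $\mathcal{U}_c$: those $U\in\mathcal{U}$ with $U'(t)/U(t)\le\alpha/t$ for $0<t\le\pi/2$ for some $0<\alpha<1$. $\eta_U$ is defined by $U(t)=e^{-\eta_U(|\log t|)}$ for $0<t\le1$ with $U(t)\le e^{-1}$; $\omega_U$ is the (increasing) function defined by $\eta_U(x/\omega_U(x))=\omega_U(x)$ for $x\ge0$ with $\eta_U(x)\ge1$. *)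

(* Defs.v *)
From HB Require Import structures.
From mathcomp Require Import all_boot all_order all_algebra.
From mathcomp Require Import all_classical all_reals all_analysis.
Set Implicit Arguments. Unset Strict Implicit. Unset Printing Implicit Defensive.
Import Order.TTheory GRing.Theory Num.Theory.
Import numFieldNormedType.Exports.
Local Open Scope classical_set_scope.
Local Open Scope ring_scope.

Fixpoint iter_derive {R : realType} (n : nat) (f : R -> R) : R -> R :=
  match n with
  | O => f
  | S m => derive1 (iter_derive m f)
  end.

(* The class U, written directly on U(t) = u(e^{it}):
   u continuous on T and u(z) = u(conj z)  <->  U continuous, 2pi-periodic, even;
   u smooth except possibly at 1 <-> U smooth off 2 pi Z. *)
Definition classU {R : realType} (U : R -> R) : Prop :=
  continuous U /\
  (forall t, U (t + 2 * pi) = U t) /\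
  (forall t, U (- t) = U t) /\
  (forall (n : nat) (t : R), (forall k : int, t != k%:~R * (2 * pi)) ->
      derivable (iter_derive n U) t 1) /\
  {in `[0, pi] &, {homo U : x y / x <= y}} /\
  U 0 = 0 /\
  ((fun t => (\int[lebesgue_measure]_(x in `[t, pi]) (U x / x ^+ 2)%:E)%E)
     @ 0^'+ --> +oo%E).

Definition classUc {R : realType} (U : R -> R) : Prop :=
  classU U /\
  exists alpha : R, 0 < alpha < 1 /\
    forall t, 0 < t <= pi / 2 -> derive1 U t / U t <= alpha / t.

(* eta_U : U(t) = exp(-eta_U(|log t|)) for 0 < t <= 1,
   i.e. eta_U(x) = - log U(e^{-x}) for x >= 0 *)
Definition etaU {R : realType} (U : R -> R) (x : R) : R :=
  - ln (U (expR (- x))).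

(* Main.v *)
Require Import Defs.
From HB Require Import structures.
From mathcomp Require Import all_boot all_order all_algebra.
From mathcomp Require Import all_classical all_reals all_analysis.
From mathcomp Require Import ring lra.
Import Order.TTheory GRing.Theory Num.Theory.
Import numFieldNormedType.Exports.
Local Open Scope classical_set_scope.
Local Open Scope ring_scope.
Lemma my_le_integral (R : realType) d (T : measurableType d) (mu : {measure set T -> \bar R}) D (f1 f2 : T -> \bar R) :
  (forall x, D x -> (0 <= f1 x)%E) -> (forall x, D x -> (f1 x <= f2 x)%E) ->
  (\int[mu]_(x in D) f1 x <= \int[mu]_(x in D) f2 x)%E.
Proof.
move=> f10 f12.
have f20 : forall x, D x -> (0 <= f2 x)%E by move=> x Dx; exact: le_trans (f10 x Dx) (f12 x Dx).
rewrite !ge0_integralE//.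
apply: ge_ereal_sup => _ [h hf <-]; apply: ereal_sup_ubound; exists h => // x.
apply: le_trans (hf x) _; rewrite /patch; case: ifP => // /[1!inE] Dx; exact: f12.
Qed.
Lemma Upos (R : realType) (U : R -> R) : classU U -> forall t, 0 < t <= pi -> 0 < U t.
Proof.
case=> [Ucont [_ [_ [_ [Umono [U0 Hint]]]]]] t0 /andP[t0p t0pi].
have inI x : 0 <= x <= pi -> x \in `[0, pi] by move=> ?; rewrite in_itv.
have Uge0 x : 0 <= x <= pi -> 0 <= U x.
  move=> hx; rewrite -U0; apply: Umono => //; first by apply: inI; rewrite lexx pi_ge0.
  by case/andP: hx.
rewrite ltNge; apply/negP => Ut0.
have U0on x : 0 <= x <= t0 -> U x = 0.
  case/andP=> x0 xt0; apply/eqP; rewrite eq_le Uge0 ?x0 ?(le_trans xt0) // andbT.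
  apply: le_trans Ut0; apply: Umono => //; apply: inI; rewrite ?x0 ?(le_trans xt0) //.
  by rewrite (ltW t0p).
set c := U pi / t0 ^+ 2.
have c0 : 0 <= c by rewrite divr_ge0 ?Uge0 ?pi_ge0 ?lexx // sqr_ge0.
have := cvgey_ge Hint (c * pi + 1).
move=> H; have {}H := H (at_right_proper_filter 0).
near (0:R)^'+ => t.
have t0' : 0 < t by near: t; exact: nbhs_right_gt.
have tt0 : t < t0 by near: t; exact: nbhs_right_lt.
have : ((c * pi + 1)%:E <= \int[lebesgue_measure]_(x in `[t, pi]) (U x / x ^+ 2)%:E)%E by near: t; exact: H.
rewrite leNgt => HH; move/negP: HH; apply.
apply: (@le_lt_trans _ _ (\int[lebesgue_measure]_(x in `[t, pi]) (cst c%:E) x)%E).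
  apply: my_le_integral => x /=; rewrite in_itv /= => /andP[tx xpi].
    by rewrite lee_fin divr_ge0 ?Uge0 ?sqr_ge0 // xpi (le_trans (ltW t0') tx).
  rewrite lee_fin; have [xt0|t0x] := leP x t0.
    by rewrite U0on ?mul0r // xt0 (le_trans (ltW t0') tx).
  have x0 : 0 < x by rewrite (lt_trans t0p).
  apply: ler_pM; rewrite ?Uge0 ?invr_ge0 ?sqr_ge0 ?xpi ?(ltW x0) //.
    by apply: Umono => //; apply: inI; rewrite ?xpi ?(ltW x0) ?lexx ?pi_ge0.
  rewrite lef_pV2 ?posrE ?exprn_gt0 //.
  nra.
rewrite integral_cst //= lebesgue_measure_itv /=.
rewrite lte_fin (lt_le_trans tt0 t0pi) -EFinD -EFinM lte_fin.
have : c * (pi - t) <= c * pi by rewrite ler_wpM2l // lerBlDr lerDl ltW.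
move=> h; apply: le_lt_trans h _; rewrite ltrDl //.
Unshelve. all: by end_near.
Qed.

Lemma eta_mono (R : realType) (U : R -> R) : classU U ->
  forall y1 y2, 0 <= y1 -> y1 <= y2 -> etaU U y1 <= etaU U y2.
Proof.
move=> HU y1 y2 y10 y12.
have hin (y : R) : 0 <= y -> 0 < expR (- y) <= pi.
  move=> y0; rewrite expR_gt0 /=; apply: (@le_trans _ _ 1).
    by rewrite expR_le1 oppr_le0.
  by apply: le_trans (@pi_ge2 R); rewrite ler1n.
have y20 : 0 <= y2 := le_trans y10 y12.
have Up (y : R) : 0 <= y -> 0 < U (expR (- y)) by move=> h; apply: (@Upos _ _ HU); exact: hin.
rewrite /etaU lerN2 ler_ln ?posrE ?Up //.
case: HU => [_ [_ [_ [_ [Umono _]]]]].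
apply: Umono; rewrite ?in_itv /=.
- by case/andP: (hin _ y20) => /ltW -> ->.
- by case/andP: (hin _ y10) => /ltW -> ->.
by rewrite ler_expR lerN2.
Qed.

Lemma eta_uniq (R : realType) (U : R -> R) : classU U ->
  forall x a b, 0 <= x -> 0 < a -> 0 < b ->
  etaU U (x / a) = a -> etaU U (x / b) = b -> a = b.
Proof.
move=> HU x a b x0 a0 b0 ha hb.
wlog ab : a b a0 b0 ha hb / a <= b.
  move=> W; have [/W|/ltW/W] := leP a b; first exact.
  by move=> h; symmetry; apply: h.
apply/eqP; rewrite eq_le ab /=.
rewrite -[X in X <= _]hb -[X in _ <= X]ha; apply: eta_mono => //.
  by rewrite divr_ge0 // ltW.
by apply: ler_wpM2l => //; rewrite lef_pV2 ?posrE.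
Qed.
Lemma aux1 (R : realFieldType) (w a b : R) : b <= 1/2*w -> -b <= a -> w/2 <= w + a.
Proof. move=> *; lra. Qed.
Lemma aux2 (R : realFieldType) (d y w l e eps x : R) : 0 < y -> 0 < w -> x = y * w ->
  l = w + y * d -> 0 < l -> `|d * y| <= e * w -> e <= eps / 2 -> 0 < e ->
  d * l^-1 / w <= eps / x.
Proof.
move=> y0 w0 -> -> l0 bd eeps e0.
have eps0 : 0 < eps by move: (lt_le_trans e0 eeps); rewrite divr_gt0 // ?ltr0n //; lra.
have -> : d * (w + y * d)^-1 / w = (d * y / (w + y * d)) / (y * w).
  by field; rewrite ?gt_eqF //; apply/andP; split; rewrite ?gt_eqF.
rewrite ler_pM2r ?invr_gt0 ?mulr_gt0 // ler_pdivrMr //.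
move: bd; rewrite ler_norml => /andP[h1 h2].
have ew : e * w <= eps / 2 * w by rewrite ler_pM2r.
have [dy0|dy0] := leP (d * y) 0.
  by apply: le_trans dy0 _; rewrite mulr_ge0 // ltW.
have : 0 <= eps * (y * d) by apply: mulr_ge0; [exact: ltW | rewrite mulrC; exact: ltW].
move: l0 h2 ew; set a := d * y; rewrite [y * d]mulrC -/a => l0 h2 ew h3.
have : eps / 2 * w <= eps * w by rewrite ler_pM2r // ler_pdivrMr //; lra.
nra.
Qed.

Theorem lemma6p4 (R : realType) (U : R -> R) (omega : R -> R) :
  classUc U ->
  (\forall x \near +oo, derivable (etaU U) x 1) ->
  (forall eps : R, 0 < eps ->
     \forall x \near +oo, `| derive1 (etaU U) x / etaU U x | <= eps / x) ->
  (\forall x \near +oo, 1 <= omega x /\ etaU U (x / omega x) = omega x) ->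
  forall eps : R, 0 < eps ->
    \forall x \near +oo, derivable omega x 1 /\ derive1 omega x / omega x <= eps / x.
Proof.
move=> HUc Hder Hbd Hom eps eps0.
have HU := HUc.1.
set eta := etaU U.
pose e := Num.min (1/2) (eps/2).
have e0 : 0 < e by rewrite lt_min; apply/andP; split; rewrite divr_gt0.
have e12 : e <= 1/2 by rewrite ge_min lexx.
have eeps : e <= eps/2 by rewrite ge_min lexx orbT.
have P : \forall y \near +oo, derivable eta y 1 /\ `|derive1 eta y / eta y| <= e / y.
  near=> y; split; near: y; [exact: Hder | exact: Hbd].
case: P => M [Mr HM].
case: Hom => N [Nr HN].
pose Y0 := `|M| + 1.
have Y0M : M < Y0 by rewrite /Y0 (le_lt_trans (ler_norm M)) // ltrDl.
have Y00 : 0 < Y0 by rewrite /Y0 ltr_wpDl.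
pose E0 := eta Y0.
exists (Num.max N (Y0 * (`|E0| + 1))); split; first by rewrite num_real.
move=> x; rewrite gt_max => /andP[xN xbig].
have x0 : 0 < x by apply: lt_trans xbig; rewrite mulr_gt0 // ltr_wpDl.
have [w1 hw] := HN x xN.
set w := omega x in w1 hw *.
have w0 : 0 < w by apply: lt_le_trans w1.
set y := x / w in hw *.
have y0 : 0 < y by rewrite divr_gt0.
have xyw : x = y * w by rewrite /y divfK // gt_eqF.
have yY0 : Y0 < y.
  rewrite ltNge; apply/negP => yle.
  have : w <= E0 by rewrite -hw; apply: eta_mono => //; exact: ltW.
  move=> wE0.
  have : x <= Y0 * w by rewrite xyw ler_wpM2r // ltW.
  move=> h; move: xbig; rewrite ltNge => /negP; apply.
  apply: le_trans h _; rewrite ler_wpM2l // ?ltW //.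
  by apply: le_lt_trans wE0 _; apply: le_lt_trans (ler_norm _) _; rewrite ltrDl.
have yM : M < y := lt_trans Y0M yY0.
have [dery bdy] := HM y yM.
have hw' : eta y = w := hw.
set d := derive1 eta y in bdy *.
have bd : `|d * y| <= e * w.
  move: bdy; rewrite hw' normrM normfV (gtr0_norm w0) normrM (gtr0_norm y0).
  rewrite ler_pdivrMr // mulrAC ler_pdivlMr //.
pose l := w + y * d.
have hl : w / 2 <= l.
  have ew : e * w <= 1 / 2 * w by rewrite ler_pM2r.
  move: bd; rewrite ler_norml => /andP[h1 h2]; rewrite /l [y * d]mulrC.
  exact: aux1 ew h1.
have l0 : 0 < l by apply: lt_le_trans hl; rewrite divr_gt0.
pose K : R -> R := (@id R) * eta.
have KE t : K t = t * eta t by [].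
have derK t : M < t -> derivable K t 1.
  move=> Mt; apply: derivableM; first exact: derivable_id.
  by case: (HM t Mt).
have etad : is_derive y 1 eta d by rewrite /d derive1E; exact: derivableP.
have Kd : is_derive y 1 K l.
  apply: (is_derive_eq (is_deriveM (is_derive_id y 1) etad)).
  by rewrite /l hw' /GRing.scale /= mulr1 addrC.
have Kc : {near y, continuous K}.
  near=> t; apply: differentiable_continuous; apply/derivable1_diffP; apply: derK.
  by near: t; exact: lt_nbhsr yM.
have Kcy : {for y, continuous K}.
  by apply: differentiable_continuous; apply/derivable1_diffP; apply: derK.
have etac : {for y, continuous eta}.
  by apply: differentiable_continuous; apply/derivable1_diffP.
have Ky : K y = x by rewrite KE hw' -xyw.
pose Yf : R -> R := fun t => t / omega t.
have cancelK : {near y, cancel K Yf}.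
  near=> t.
  have Mt : M < t by near: t; exact: lt_nbhsr yM.
  have t0 : 0 < t by near: t; exact: lt_nbhsr y0.
  have et0 : 0 < eta t by near: t; apply: (cvgr_gt _ etac); rewrite hw'.
  have NK : N < K t by near: t; apply: (cvgr_gt _ Kcy); rewrite Ky.
  have [om1 hom] := HN (K t) NK.
  have Kt0 : 0 <= K t by rewrite KE mulr_ge0 // ltW.
  have eqo : omega (K t) = eta t.
    apply: (@eta_uniq _ _ HU _ _ _ Kt0) => //.
    - by apply: lt_le_trans om1.
    - by rewrite KE mulfK // gt_eqF.
  by rewrite /Yf eqo KE mulfK // gt_eqF.
have Yd : is_derive x 1 Yf l^-1.
  rewrite -Ky; apply: (is_derive_inverse cancelK Kc Kd); by rewrite gt_eqF.
have omegaE : {near x, (eta \o Yf) =1 omega}.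
  near=> t.
  have Nt : N < t by near: t; exact: lt_nbhsr xN.
  by case: (HN t Nt) => _ h; exact: h.
have Yder : derivable Yf x 1 by case: Yd.
have compd : derivable (eta \o Yf) x 1.
  apply/derivable1_diffP; apply: differentiable_comp; apply/derivable1_diffP.
    exact: Yder.
  exact: dery.
have derval : derive1 (eta \o Yf) x = d * l^-1.
  rewrite (derive1_comp Yder dery); congr (_ * _).
  by rewrite derive1E; case: Yd.
split; first exact: near_eq_derivable omegaE compd.
rewrite derive1E -(near_eq_derive (1 : R) omegaE) -derive1E derval.
exact: (@aux2 R d y w l e eps x y0 w0 xyw erefl l0 bd eeps e0).
Unshelve. all: by end_near.
Qed.
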